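(* Let $\mathcal F$ be a Grothendieck topology on a finite monoid $M$. Then there is a two-sided ideal $\mathfrak m$ of $M$ with $\mathfrak m^2=\mathfrak m$ such that $\mathcal F=\mathcal F_{\mathfrak m}:=\{\mathfrak a \text{ right ideal}\mid \mathfrak m\subseteq\mathfrak a\}$.
   Context: Right ideals may be empty. $\mathfrak m^2=\{xy\mid x,y\in\mathfrak m\}$. For a right ideal $\mathfrak a$ and $m\in M$, $(\mathfrak a:m)=\{x\in M\mid mx\in\mathfrak a\}$. A Grothendieck topology on $M$ is a set $\mathcal F$ of right ideals such that (T1) $M\in\mathcal F$; (T2) $\mathfrak a\in\mathcal F$, $m\in M$ imply $(\mathfrak a:m)\in\mathcal F$; (T3) if $\mathfrak b\in\mathcal F$ and $\mathfrak a$ is a right ideal with $(\mathfrak a:b)\in\mathcal F$ for all $b\in\mathfrak b$, then $\mathfrak a\in\mathcal F$. *)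

(* Defs.v *)
From mathcomp Require Import all_boot.
Set Implicit Arguments. Unset Strict Implicit. Unset Printing Implicit Defensive.

(* A finite monoid is given by a finType T with an operation mul and unit one,
   subject to the monoid axioms (stated as hypotheses of the theorem).
   Subsets of M are finite sets {set T}. *)
Section MonoidDefs.
Variables (T : finType) (mul : T -> T -> T).

Definition right_ideal (a : {set T}) : bool :=
  [forall x, forall m, (x \in a) ==> (mul x m \in a)].
Definition left_ideal (a : {set T}) : bool :=
  [forall x, forall m, (x \in a) ==> (mul m x \in a)].
Definition two_sided_ideal (a : {set T}) : bool := right_ideal a && left_ideal a.

Definition ideal_quot (a : {set T}) (m : T) : {set T} := [set x | mul m x \in a].

Definition ideal_sq (m : {set T}) : {set T} := [set mul x y | x in m, y in m].

Definition grothendieck_topology (F : {set {set T}}) : Prop :=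
  [/\ (forall a, a \in F -> right_ideal a),
      setT \in F,
      (forall a m, a \in F -> ideal_quot a m \in F) &
      (forall b a, b \in F -> right_ideal a ->
         (forall y, y \in b -> ideal_quot a y \in F) -> a \in F)].

Definition topology_of (m : {set T}) : {set {set T}} :=
  [set a | right_ideal a && (m \subset a)].
End MonoidDefs.

(* Main.v *)
Require Import Defs.
From mathcomp Require Import all_boot.

Theorem proposition4p3 (T : finType) (mul : T -> T -> T) (one : T)
  (mulA : associative mul) (mul1 : left_id one mul) (mul1r : right_id one mul)
  (F : {set {set T}}) (HF : grothendieck_topology mul F) :
  exists m : {set T},
    [/\ two_sided_ideal mul m, ideal_sq mul m = m & F = topology_of mul m].
Proof.
case: HF => Hri HT Hq H3.
have riP : forall a : {set T}, reflect (forall x y, x \in a -> mul x y \in a) (right_ideal mul a).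
  move=> a; apply: (iffP forallP) => [H x y xa|H x].
    by have /forallP/(_ y)/implyP := H x; apply.
  by apply/forallP => y; apply/implyP => xa; apply: H.
have up : forall a c : {set T}, a \in F -> right_ideal mul c -> a \subset c -> c \in F.
  move=> a c aF rc ac; apply: (H3 a) => // y ya.
  suff -> : ideal_quot mul c y = setT by [].
  apply/setP => x; rewrite !inE; apply: (riP c rc).
  exact: (subsetP ac).
have capF : forall a b : {set T}, a \in F -> b \in F -> a :&: b \in F.
  move=> a b aF bF; apply: (H3 b) => //.
    apply/riP => x y; rewrite !inE => /andP[xa xb].
    by rewrite (riP a (Hri a aF)) // (riP b (Hri b bF)).
  move=> y yb.
  suff -> : ideal_quot mul (a :&: b) y = ideal_quot mul a y by apply: Hq.
  apply/setP => x; rewrite !inE.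
  by rewrite (riP b (Hri b bF)) // andbT.
set m := \bigcap_(a in F) a.
have mF : m \in F.
  rewrite /m; apply: (big_ind (fun s => s \in F)) => //.
have msub : forall a : {set T}, a \in F -> m \subset a.
  by move=> a aF; apply: bigcap_inf.
have rm := Hri m mF.
have qri : forall (a : {set T}) y, right_ideal mul a -> right_ideal mul (ideal_quot mul a y).
  move=> a y ra; apply/riP => x z; rewrite !inE => h.
  by rewrite mulA; apply: (riP a ra).
have sqri : right_ideal mul (ideal_sq mul m).
  apply/riP => x z /imset2P[u v um vm ->].
  rewrite -mulA; apply/imset2P; exists u (mul v z) => //.
  exact: (riP m rm).
have sq_sub : ideal_sq mul m \subset m.
  apply/subsetP => x /imset2P[u v um vm ->]; exact: (riP m rm).
exists m; split.
- rewrite /two_sided_ideal rm /=.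
  apply/forallP => x; apply/forallP => y; apply/implyP => xm.
  have := subsetP (msub _ (Hq m y mF)) x xm.
  by rewrite inE.
- apply/eqP; rewrite eqEsubset sq_sub /=.
  apply: msub; apply: (H3 m) => // y ym.
  apply: (up m) => //; first exact: qri.
  apply/subsetP => x xm; rewrite inE; apply/imset2P; by exists y x.
- apply/setP => a; rewrite inE; apply/idP/idP.
    by move=> aF; rewrite Hri //= msub.
  by case/andP => ra ma; apply: (up m).
Qed.
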